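(* Let $(\mathbb X,S)$ be a minimal subshift over a finite alphabet satisfying the Boshernitzan condition, let $(\mathbb X',S')$ be a $p$-periodic subshift, let $T=S\times S'$ on $\mathbb X\times\mathbb X'$, and let $\mathrm s(p)$ be the number of $S^p$-minimal components of $\mathbb X$. The following are equivalent: (a) $(\mathbb X\times\mathbb X',T)$ is topologically conjugate to a minimal subshift satisfying the Boshernitzan condition; (b) $(\mathbb X\times\mathbb X',T)$ is minimal; (c) $\mathrm s(p)=1$; (d) $(\mathbb X,S)$ has no topological eigenvalue of the form $e^{2\pi ik/p}$, $k\in\mathbb Z$, other than $1$.
   Context: A $p$-periodic subshift is the set of all translates of a single $p$-periodic sequence. Boshernitzan condition for a minimal subshift: there is a shift-invariant probability measure $\nu$ with $\limsup_{n}n\min\{\nu[u]:u\in\mathcal L_n(\mathbb X)\}>0$, $\mathcal L_n(\mathbb X)$ the length-$n$ words occurring in $\mathbb X$, $[u]$ the corresponding cylinder set at position $0$. A topological eigenvalue is $z\in\mathbb C$ with $f\circ S=zf$ for some continuous $f\not\equiv0$. An $S^p$-minimal component is a nonempty closed $S^p$-invariant set minimal with these properties. *)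

(* Defs.v *)
From HB Require Import structures.
From mathcomp Require Import all_boot all_order all_algebra.
From mathcomp Require Import all_classical all_reals all_analysis.
From mathcomp Require Import Rstruct.
From mathcomp Require Import complex.

Set Implicit Arguments.
Unset Strict Implicit.
Unset Printing Implicit Defensive.

Import Order.TTheory GRing.Theory Num.Theory.
Local Open Scope classical_set_scope.
Local Open Scope ring_scope.

Notation RR := Rdefinitions.R.
Notation CC := (complex RR).

Section Shifts.
Variable A : Type.

Definition shift (x : int -> A) : int -> A := fun i => x (i + 1).

(** x and y agree on the window [-m, m] (these windows give the cylinder
    base of the product topology of the discrete alphabet) *)
Definition agree (m : nat) (x y : int -> A) : Prop :=
  forall i : int, - (m%:Z) <= i <= m%:Z -> x i = y i.
End Shifts.

Section Generic.
Variable T U : Type.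
(** ag n: basic-neighbourhood relation of level n. *)
Definition closedW (ag : nat -> T -> T -> Prop) (Y : set T) : Prop :=
  forall z, (forall n, exists y, Y y /\ ag n z y) -> Y z.

Definition invariantW (f : T -> T) (Y : set T) : Prop := forall y, Y y -> Y (f y).

Definition minimalW (ag : nat -> T -> T -> Prop) (f : T -> T) (Z : set T) : Prop :=
  (exists z, Z z) /\
  forall Y, Y `<=` Z -> (exists y, Y y) -> closedW ag Y -> invariantW f Y -> Y = Z.

Definition contW (agT : nat -> T -> T -> Prop) (agU : nat -> U -> U -> Prop)
  (Z : set T) (f : T -> U) : Prop :=
  forall z, Z z -> forall n, exists m, forall z', Z z' -> agT m z z' -> agU n (f z) (f z').
End Generic.

Section Subshift.
Variable A : finType.

Definition subshift (X : set (int -> A)) : Prop :=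
  (exists x, X x) /\ closedW (@agree A) X /\ (forall x, X x <-> X (shift x)).

Definition minimal_subshift (X : set (int -> A)) : Prop :=
  subshift X /\ minimalW (@agree A) (@shift A) X.

Definition cyl (i : int) (n : nat) (u : n.-tuple A) : set (int -> A) :=
  [set x | forall j : 'I_n, x (i + (j : nat)%:Z) = tnth u j].

Definition in_lang (X : set (int -> A)) (n : nat) (u : n.-tuple A) : Prop :=
  exists x, X x /\ cyl 0 u x.

(** A, pointed by a (only used to build the measurable space A^Z, whose
    carrier must be a pointedType in MathComp-Analysis; the point is irrelevant) *)
Definition ptA (a : A) : pointedType := HB.pack_for pointedType A (isPointed.Build A a).
Definition seqpt (a : A) : pointedType := (int -> ptA a : pointedType).

(** cylinder sets; they generate the Borel sigma-algebra of A^Z *)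
Definition cylinders (a : A) : set (set (seqpt a)) :=
  [set C | exists i n (u : n.-tuple A), C = cyl i u].

Definition min_cyl_measure (a : A) (X : set (int -> A))
  (nu : set (g_sigma_algebraType (@cylinders a)) -> \bar RR) (n : nat) : \bar RR :=
  \big[Order.min/+oo%E]_(u : n.-tuple A | `[< in_lang X u >]) nu (cyl 0 u).

Definition boshernitzan (X : set (int -> A)) : Prop :=
  exists (a : A) (nu : probability (g_sigma_algebraType (@cylinders a)) RR),
    (forall B : set (g_sigma_algebraType (@cylinders a)),
        measurable B -> nu ((@shift A) @^-1` B) = nu B) /\
    nu X = 1%E /\
    (0 < limn_esup (fun n => (n%:R)%:E * min_cyl_measure X nu n))%E.

Definition topological_eigenvalue (X : set (int -> A)) (z : CC) : Prop :=
  exists f : (int -> A) -> CC,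
    (forall x, X x -> forall e : RR, 0 < e ->
        exists m, forall y, X y -> agree m x y -> ComplexField.Normc.normc (f x - f y) < e) /\
    (forall x, X x -> f (shift x) = z * f x) /\
    (exists x, X x /\ f x != 0).

Definition Sp_minimal_component (X : set (int -> A)) (p : nat) (Y : set (int -> A)) :=
  Y `<=` X /\ closedW (@agree A) Y /\ invariantW (iter p (@shift A)) Y /\
  minimalW (@agree A) (iter p (@shift A)) Y.
End Subshift.

Section Periodic.
Variable B : finType.
Definition periodic_subshift (p : nat) (X : set (int -> B)) : Prop :=
  exists w : int -> B,
    (forall i, w (i + p%:Z) = w i) /\
    (forall q : nat, (0 < q < p)%N -> exists i, w (i + q%:Z) != w i) /\
    X = [set x | exists k : int, x = fun i => w (i + k)].
End Periodic.

Section Product.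
Variables A B : finType.
Definition prod_space (X : set (int -> A)) (X' : set (int -> B)) : set ((int -> A) * (int -> B)) :=
  [set z | X z.1 /\ X' z.2].
Definition prod_shift (z : (int -> A) * (int -> B)) := (shift z.1, shift z.2).
Definition agreeP (m : nat) (z z' : (int -> A) * (int -> B)) :=
  agree m z.1 z'.1 /\ agree m z.2 z'.2.

Definition conj_to_bosh_minimal_subshift (X : set (int -> A)) (X' : set (int -> B)) : Prop :=
  exists (C : finType) (Y : set (int -> C))
         (phi : (int -> A) * (int -> B) -> int -> C)
         (psi : (int -> C) -> (int -> A) * (int -> B)),
    minimal_subshift Y /\ boshernitzan Y /\
    (forall z, prod_space X X' z -> Y (phi z)) /\
    (forall y, Y y -> prod_space X X' (psi y)) /\
    (forall z, prod_space X X' z -> psi (phi z) = z) /\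
    (forall y, Y y -> phi (psi y) = y) /\
    contW agreeP (@agree C) (prod_space X X') phi /\
    contW (@agree C) agreeP Y psi /\
    (forall z, prod_space X X' z -> phi (prod_shift z) = shift (phi z)).
End Product.

(* Main.v *)
Require Import Defs.
From HB Require Import structures.
From mathcomp Require Import all_boot all_order all_algebra.
From mathcomp Require Import all_classical all_reals all_analysis.
From mathcomp Require Import Rstruct complex.
From mathcomp Require Import zify ring lra.
Set Implicit Arguments.
Unset Strict Implicit.
Unset Printing Implicit Defensive.
Import Order.TTheory GRing.Theory Num.Theory.
Local Open Scope classical_set_scope.
Local Open Scope ring_scope.

Section Mix.
Context d1 d2 (T1 : measurableType d1) (T2 : measurableType d2).
Variables (nu : probability T1 RR) (q : nat) (g : nat -> T1 -> T2).
Hypothesis mg : forall j, measurable_fun setT (g j).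
Hypothesis q0 : (0 < q)%N.

Definition pf (j : nat) (E : set T2) : \bar RR := nu (g j @^-1` E).

Section PF.
Variable j : nat.
Let pf0 : pf j set0 = 0%E. Proof. by rewrite /pf preimage_set0 measure0. Qed.
Let pf_ge0 E : (0 <= pf j E)%E. Proof. exact: measure_ge0. Qed.
Let pf_sa : semi_sigma_additive (pf j).
Proof.
move=> F mF tF mUF; rewrite /pf preimage_bigcup.
apply: measure_semi_sigma_additive.
- by move=> n; rewrite -[X in measurable X]setTI; exact: mg.
- apply/trivIsetP => /= i k _ _ ik; rewrite -preimage_setI.
  by move/trivIsetP : tF => /(_ _ _ _ _ ik) ->//; rewrite preimage_set0.
- by rewrite -preimage_bigcup -[X in measurable X]setTI; exact: mg.
Qed.
HB.instance Definition _ := isMeasure.Build _ _ _ (pf j) pf0 pf_ge0 pf_sa.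
End PF.

Definition invq : {nonneg RR} := @NngNum _ (q%:R^-1) (ltac:(by rewrite invr_ge0 ler0n)).

Definition mix := let _ := q0 in mscale invq (msum (fun j => (pf j : {measure set T2 -> \bar RR})) q).

HB.instance Definition _ := Measure.on mix.

Lemma mixE E : mix E = ((q%:R^-1)%:E * \sum_(j < q) nu (g j @^-1` E))%E.
Proof. by []. Qed.

Let mix_setT : mix setT = 1%E.
Proof.
rewrite mixE.
under eq_bigr do rewrite preimage_setT probability_setT.
rewrite sumEFin sumr_const card_ord -EFinM mulVf //.
by rewrite pnatr_eq0 -lt0n.
Qed.

HB.instance Definition _ := Measure_isProbability.Build _ _ _ mix mix_setT.
End Mix.


Lemma limsup_pos (u v : nat -> \bar RR) (c : RR) : 0 < c ->
  (forall n, (c%:E * u n <= v n)%E) -> (0 < limn_esup u)%E -> (0 < limn_esup v)%E.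
Proof.
move=> c0 uv upos.
have [r r0 rL] : exists2 r : RR, 0 < r & (r%:E < limn_esup u)%E.
  move: upos; case: (limn_esup u) => [l| |] //.
  - rewrite lte_fin => l0; exists (l / 2); [by rewrite divr_gt0 | rewrite lte_fin; lra].
  - by move=> _; exists 1 => //; rewrite ltry.
have Lle : forall n, (limn_esup u <= esups u n)%E.
  move=> n; rewrite limn_esup_lim; apply: lime_le; first exact: is_cvg_esups.
  by exists n => // m /= nm; exact: nonincreasing_esups.
have key : forall n, ((c * r)%:E <= esups v n)%E.
  move=> n; have := lt_le_trans rL (Lle n).
  rewrite /esups /= => /ereal_sup_gt [_ [k /= nk <-]] rk.
  apply: le_trans (_ : v k <= _)%E; last by apply: ereal_sup_ubound; exists k.
  apply: le_trans (uv k); rewrite EFinM; apply: lee_wpmul2l; [by rewrite lee_fin ltW | exact: ltW].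
rewrite limn_esup_lim; apply: lt_le_trans (_ : (c * r)%:E <= _)%E.
  by rewrite lte_fin mulr_gt0.
apply: lime_ge; first exact: is_cvg_esups.
by apply: nearW.
Qed.



Section Gen.
Variable T : Type.
Variable ag : nat -> T -> T -> Prop.
Hypothesis agmono : forall m n x y, (m <= n)%N -> ag n x y -> ag m x y.

Lemma closedW_contra (Y : set T) z : closedW ag Y -> ~ Y z ->
  exists n, forall y, Y y -> ~ ag n z y.
Proof.
move=> cY nYz; apply: contrapT => H; apply: nYz; apply: cY => n.
apply: contrapT => H2; apply: H; exists n => y Yy agy; apply: H2; by exists y.
Qed.

Lemma closedW_finU (F : nat -> set T) (p : nat) :
  (forall j, (j < p)%N -> closedW ag (F j)) ->
  closedW ag [set z | exists2 j, (j < p)%N & F j z].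
Proof.
move=> cF z Hz; apply: contrapT => nz.
have H : forall j : 'I_p, exists n, forall y, F j y -> ~ ag n z y.
  move=> j; apply: closedW_contra; first exact: cF.
  by move=> Fz; apply: nz; exists j.
have [f Hf] := choice H.
have [y [[j jp Fy] agy]] := Hz (\max_(j < p) f j)%N.
apply: (Hf (Ordinal jp) y Fy); apply: agmono agy.
exact: (leq_bigmax (Ordinal jp)).
Qed.

Lemma closedW_setI (Y1 Y2 : set T) : closedW ag Y1 -> closedW ag Y2 ->
  closedW ag (Y1 `&` Y2).
Proof.
move=> c1 c2 z Hz; split.
  by apply: c1 => n; have [y [[? ?] ?]] := Hz n; exists y.
by apply: c2 => n; have [y [[? ?] ?]] := Hz n; exists y.
Qed.

Lemma closedW_preim (U : Type) (agU : nat -> U -> U -> Prop) (f : T -> U) (Y : set U) :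
  (forall n, exists m, forall x y, ag m x y -> agU n (f x) (f y)) ->
  closedW agU Y -> closedW ag (f @^-1` Y).
Proof.
move=> cf cY z Hz; apply: cY => n; have [m Hm] := cf n.
have [y [Yy agy]] := Hz m; exists (f y); split => //; exact: Hm.
Qed.
End Gen.

Definition sh (A : Type) (k : int) (x : int -> A) : int -> A := fun i => x (i + k).
Arguments sh {A}.

Section ShiftLemmas.
Variable A : Type.
Implicit Types x y : int -> A.

Lemma iter_shift n x : iter n (@Defs.shift A) x = sh n%:Z x.
Proof.
elim: n => [|n IH]; first by apply/funext => i; rewrite /sh addr0.
rewrite iterS IH; apply/funext => i; rewrite /Defs.shift /sh; congr x; lia.
Qed.

Lemma shD k l x : sh k (sh l x) = sh (k + l) x.
Proof. by apply/funext => i; rewrite /sh addrA. Qed.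

Lemma sh0 x : sh 0 x = x.
Proof. by apply/funext => i; rewrite /sh addr0. Qed.

Lemma shift_sh x : Defs.shift x = sh 1 x.
Proof. by []. Qed.

Lemma agree_mono m n x y : (m <= n)%N -> agree n x y -> agree m x y.
Proof. move=> mn H i Hi; apply: H; lia. Qed.

Lemma agree_refl n x : agree n x x.
Proof. by []. Qed.

Lemma agree_sym n x y : agree n x y -> agree n y x.
Proof. by move=> H i Hi; rewrite H. Qed.

Lemma agree_sh m k x y : agree (m + `|k|) x y -> agree m (sh k x) (sh k y).
Proof.
move=> H i Hi; rewrite /sh; apply: H.
case: k Hi => n; rewrite ?NegzE; lia.
Qed.

Lemma agree_eq x y : (forall n, agree n x y) -> x = y.
Proof.
move=> H; apply/funext => i; apply: (H `|i|%N).
case: i => n; rewrite ?NegzE; lia.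
Qed.

Lemma sh_cont k : forall n, exists m, forall x y, agree m x y -> agree n (sh k x) (sh k y).
Proof. move=> n; exists (n + `|k|)%N => x y; exact: agree_sh. Qed.

Lemma closedW_sh k (Y : set (int -> A)) : closedW (@agree A) Y ->
  closedW (@agree A) [set x | Y (sh k x)].
Proof. move=> cY; exact: (closedW_preim (sh_cont k) cY). Qed.
End ShiftLemmas.

Section Periodic.
Variable B : Type.
Variables (w : int -> B) (p : nat).
Hypothesis hw : forall i, w (i + p%:Z) = w i.

Lemma wper_nat i (m : nat) : w (i + (m * p)%N%:Z) = w i.
Proof.
elim: m i => [|m IH] i; first by rewrite mul0n addr0.
by rewrite mulSn PoszD addrA IH hw.
Qed.

Lemma wper_int i (m : int) : w (i + m * p%:Z) = w i.
Proof.
case: m => m; first by rewrite -PoszM wper_nat.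
rewrite NegzE mulNr -PoszM.
by rewrite -[LHS](wper_nat _ m.+1) subrK.
Qed.

Lemma sh_per_int k (m : int) : sh (k + m * p%:Z) w = sh k w.
Proof. by apply/funext => i; rewrite /sh addrA wper_int. Qed.

Lemma wmod (hp : (0 < p)%N) (k : int) : exists j : nat, (j < p)%N /\ sh k w = sh j%:Z w.
Proof.
have p0 : (p%:Z != 0) by rewrite eqz_nat -lt0n.
have r0 : 0 <= (k %% p%:Z)%Z by apply: modz_ge0.
have rp : (k %% p%:Z)%Z < p%:Z by apply: ltz_pmod; rewrite ltz_nat.
exists `|(k %% p%:Z)%Z|%N; split.
- by rewrite -ltz_nat gez0_abs.
- by rewrite gez0_abs // {1}(divz_eq k p) addrC sh_per_int.
Qed.

Lemma wmodn (j : nat) : sh j%:Z w = sh (j %% p)%N%:Z w.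
Proof. by rewrite {1}(divn_eq j p) PoszD addrC PoszM sh_per_int. Qed.
End Periodic.

Notation cis a := ((cos a) +i* (sin a))%C.

Lemma cis_mul (a b : RR) : (cis a * cis b = cis (a + b))%R.
Proof.
rewrite trigo.cosD trigo.sinD; apply/eqP; rewrite eq_complex /=; apply/andP; split; apply/eqP; ring.
Qed.

Lemma cis_pow (a : RR) n : ((cis a) ^+ n = cis (n%:R * a))%R.
Proof.
elim: n => [|n IH]; first by rewrite expr0 mul0r trigo.cos0 trigo.sin0.
by rewrite exprS IH cis_mul mulrSr mulrDl mul1r addrC.
Qed.

Lemma cis_2pi_nat (n : nat) : cos (2 * (pi : RR) * n%:R) = 1 /\ sin (2 * pi * n%:R) = 0 :> RR.
Proof.
have := cis_pow (2 * pi) n; rewrite (_ : 2 * pi = pi *+ 2); last by rewrite mulr_natl.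
rewrite (@trigo.cos2pi RR) (@trigo.sin2pi RR) (_ : (1 +i* 0)%C = 1) // expr1n => /esym /eqP.
rewrite eq_complex /= => /andP [/eqP h1 /eqP h2].
by split; rewrite mulrC.
Qed.

Lemma cis_2pi_int (k : int) : cos (2 * (pi : RR) * k%:~R) = 1 /\ sin (2 * pi * k%:~R) = 0 :> RR.
Proof.
case: k => n; first exact: cis_2pi_nat.
rewrite NegzE mulrNz mulrN trigo.cosN trigo.sinN.
have [h1 h2] := cis_2pi_nat n.+1; split; first by [].
by rewrite h2 oppr0.
Qed.

Lemma normc_small (a : CC) : (forall e : RR, 0 < e -> ComplexField.Normc.normc a < e) -> a = 0.
Proof.
move=> H; apply: ComplexField.Normc.eq0_normc; apply/eqP; rewrite eq_le; apply/andP; split.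
  rewrite leNgt; apply/negP => h; have := H _ h; by rewrite ltxx.
by case: a {H} => a b; rewrite /ComplexField.Normc.normc sqrtr_ge0.
Qed.


Section Main.
Variables (A B : finType) (X : set (int -> A)) (X' : set (int -> B)) (p : nat).
Hypothesis hp : (0 < p)%N.
Hypothesis hX : minimal_subshift X.
Variable w : int -> B.
Hypothesis hw : forall i, w (i + p%:Z) = w i.
Hypothesis hwmin : forall q : nat, (0 < q < p)%N -> exists i, w (i + q%:Z) != w i.
Hypothesis hX' : X' = [set x | exists k : int, x = fun i => w (i + k)].

Lemma X_closed : closedW (@agree A) X.
Proof. by case: hX => [[_ []]]. Qed.

Lemma X_shift x : X x <-> X (Defs.shift x).
Proof. by case: hX => [[_ [_ ]]]. Qed.

Lemma X_ne : exists x, X x.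
Proof. by case: hX => [[]]. Qed.

Lemma X_min Y : Y `<=` X -> (exists y, Y y) -> closedW (@agree A) Y ->
  invariantW (@Defs.shift A) Y -> Y = X.
Proof. by case: hX => _ [_]; apply. Qed.

Lemma X_sh_nat (n : nat) x : X x -> X (sh n%:Z x).
Proof. move=> Xx; rewrite -iter_shift; elim: n => [|n IH]; first by []. by rewrite iterS; exact: (proj1 (X_shift _) IH). Qed.

Lemma X_sh_nat_inv (n : nat) y : X (sh n%:Z y) -> X y.
Proof.
rewrite -iter_shift; elim: n => [|n IH]; first by [].
by rewrite iterS => /(proj2 (X_shift _)); exact: IH.
Qed.

Lemma X_sh k x : X x -> X (sh k x).
Proof.
case: k => n; first exact: X_sh_nat.
move=> Xx; apply: (@X_sh_nat_inv n.+1); rewrite shD NegzE addrN sh0 //.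
Qed.

Lemma X'_elem x : X' x <-> exists2 j : nat, (j < p)%N & x = sh j%:Z w.
Proof.
rewrite hX'; split.
  case=> k ->; have [j [jp e]] := wmod hw hp k; exists j => //.
by case=> j _ ->; exists j%:Z.
Qed.

Lemma X'_sh k x : X' x -> X' (sh k x).
Proof. by rewrite hX' => -[l ->]; exists (k + l); rewrite -/(sh l w) shD. Qed.

Lemma X'_shift x : X' x <-> X' (Defs.shift x).
Proof.
split; first exact: X'_sh.
by move=> /(X'_sh (-1)); rewrite shift_sh shD addNr sh0.
Qed.

Lemma X'_w j : X' (sh j w).
Proof. by rewrite hX'; exists j. Qed.

Lemma X'_closed : closedW (@agree B) X'.
Proof.
have -> : X' = [set z | exists2 j, (j < p)%N & [set sh j%:Z w] z].
  by apply/funext => x; apply/propext; rewrite X'_elem.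
apply: closedW_finU; first exact: agree_mono.
move=> j _ z Hz; apply: agree_eq => n.
by have [y [-> ag]] := Hz n.
Qed.

Lemma agreeP_mono m n (z z' : (int -> A) * (int -> B)) :
  (m <= n)%N -> agreeP n z z' -> agreeP m z z'.
Proof. by move=> mn [h1 h2]; split; apply: agree_mono mn _. Qed.

Lemma prod_closed : closedW (@agreeP A B) (prod_space X X').
Proof.
move=> z Hz; split.
  by apply: X_closed => n; have [y [[? _] [? _]]] := Hz n; exists y.1.
by apply: X'_closed => n; have [y [[_ ?] [_ ?]]] := Hz n; exists y.2.
Qed.

Lemma prod_inv z : prod_space X X' z -> prod_space X X' (prod_shift z).
Proof. by case=> h1 h2; split; [exact: (proj1 (X_shift _)) | exact: (proj1 (X'_shift _))]. Qed.

Lemma prod_ne : exists z, prod_space X X' z.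
Proof. by have [x Xx] := X_ne; exists (x, w); split => //; have := X'_w 0; rewrite sh0. Qed.

Lemma a_to_b : conj_to_bosh_minimal_subshift X X' ->
  minimalW (@agreeP A B) (@prod_shift A B) (prod_space X X').
Proof.
case=> C [Y [phi [psi [[[_ [cY shY]] [_ minY]] [_ [phiY [psiP [psiphi [phipsi [cphi [cpsi comm]]]]]]]]]]].
split; first exact: prod_ne.
move=> Z ZP [z0 Zz0] cZ iZ.
have WY : [set y | Y y /\ Z (psi y)] = Y.
  apply: minY.
  - by move=> y [].
  - exists (phi z0); split; first exact: phiY (ZP _ Zz0).
    by rewrite psiphi //; exact: ZP.
  - move=> y Hy.
    have Yy : Y y by apply: cY => n; have [y' [[Yy' _] ag]] := Hy n; exists y'.
    split => //; apply: cZ => n; have [m Hm] := cpsi y Yy n.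
    have [y' [[Yy' Zy'] ag]] := Hy m; exists (psi y'); split => //; exact: Hm.
  - move=> y [Yy Zy]; have Ysy : Y (Defs.shift y) by exact: (proj1 (shY _) Yy).
    split => //.
    have e : psi (Defs.shift y) = prod_shift (psi y).
      by rewrite -{1}(phipsi y Yy) -comm ?psiphi //; [apply: prod_inv|]; exact: psiP.
    by rewrite e; exact: iZ.
apply/funext => z; apply/propext; split; first exact: ZP.
move=> Pz; have : [set y | Y y /\ Z (psi y)] (phi z) by rewrite WY; exact: phiY.
by case=> _; rewrite psiphi.
Qed.



Lemma closedW_const2 (v : int -> B) : closedW (@agreeP A B) [set z | z.2 = v].
Proof. move=> z Hz; apply: agree_eq => n; have [y [e [_ ag]]] := Hz n; by rewrite -e. Qed.

Lemma closedW_fst_sh (k : int) (Y : set (int -> A)) : closedW (@agree A) Y ->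
  closedW (@agreeP A B) [set z | Y (sh k z.1)].
Proof.
move=> cY; apply: (closedW_preim (f := fun z : (int -> A) * (int -> B) => sh k z.1)) cY.
by move=> n; exists (n + `|k|)%N => x y [h _]; exact: agree_sh.
Qed.

Lemma w_sh_eq (j : nat) : (j < p)%N -> sh j%:Z w = w -> j = 0%N.
Proof.
move=> jp e; case: (posnP j) => // j0.
have [i /eqP ne] := hwmin (q:=j) (ltac:(by rewrite j0 jp)).
by exfalso; apply: ne; rewrite -[in RHS]e.
Qed.

Lemma X_Spmin_of_b : minimalW (@agreeP A B) (@prod_shift A B) (prod_space X X') ->
  minimalW (@agree A) (iter p (@Defs.shift A)) X.
Proof.
move=> [_ minP]; split; first exact: X_ne.
move=> Y YX [y0 Yy0] cY iY.
pose Z := [set z : (int -> A) * (int -> B) | exists2 j, (j < p)%N &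
   (prod_space X X' z /\ (z.2 = sh j%:Z w /\ Y (sh (- j%:Z) z.1)))].
have ZP : Z = prod_space X X'.
  apply: minP.
  - by move=> z [j _ []].
  - exists (y0, w); exists 0%N => //; split; last by rewrite sh0 oppr0 sh0.
    by split; [exact: YX | have := X'_w 0; rewrite sh0].
  - apply: closedW_finU; first exact: agreeP_mono.
    move=> j _; apply: closedW_setI; first exact: prod_closed.
    apply: closedW_setI; first exact: closedW_const2.
    exact: closedW_fst_sh.
  - move=> z [j jp [Pz [e2 Yz]]].
    case: (ltnP j.+1 p) => hj.
      exists j.+1 => //; split; first exact: prod_inv.
      split; first by rewrite /= e2 shift_sh shD; congr sh; lia.
      by rewrite /= shift_sh shD (_ : - (j.+1)%:Z + 1 = - j%:Z) //; lia.
    have pj : p = j.+1 by apply/eqP; rewrite eqn_leq hj jp.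
    exists 0%N => //; split; first exact: prod_inv.
    split.
      rewrite /= e2 shift_sh shD sh0 (_ : 1 + j%:Z = 0 + 1 * p%:Z); last by rewrite pj; lia.
      by rewrite sh_per_int // sh0.
    have -> : sh (- (0%N)%:Z) (Defs.shift z.1) = iter p (@Defs.shift A) (sh (- j%:Z) z.1).
      by rewrite iter_shift shift_sh !shD (_ : - (0%N)%:Z + 1 = p%:Z + - j%:Z) //; rewrite pj; lia.
    exact: iY.
apply/funext => x; apply/propext; split; first exact: YX.
move=> Xx; have : Z (x, w) by rewrite ZP; split => //; have := X'_w 0; rewrite sh0.
case=> j jp [_ [/= e Yx]].
by move: Yx; rewrite (w_sh_eq jp (esym e)) oppr0 sh0.
Qed.

Lemma b_to_c : minimalW (@agreeP A B) (@prod_shift A B) (prod_space X X') ->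
  exists Y, Sp_minimal_component X p Y /\
            forall Y', Sp_minimal_component X p Y' -> Y' = Y.
Proof.
move=> /X_Spmin_of_b mX; exists X; split.
  split => //; split; first exact: X_closed.
  split => //; move=> x Xx; rewrite iter_shift; exact: X_sh.
move=> Y' [Y'X [cY' [iY' [ne _]]]].
by case: mX => _; apply.
Qed.

Lemma c_to_Spmin : (exists Y, Sp_minimal_component X p Y /\
            forall Y', Sp_minimal_component X p Y' -> Y' = Y) ->
  minimalW (@agree A) (iter p (@Defs.shift A)) X.
Proof.
move=> [Y [[YX [cY [iY [[y0 Yy0] minY]]]] uY]].
have comm : forall x (k : int), sh k (iter p (@Defs.shift A) x) = iter p (@Defs.shift A) (sh k x).
  by move=> x k; rewrite !iter_shift !shD addrC.
pose SY := [set x | Y (sh (-1) x)].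
have cSY : Sp_minimal_component X p SY.
  split.
    move=> x Yx; have := X_sh 1 (YX _ Yx); by rewrite shD addrN sh0.
  split; first exact: closedW_sh.
  split.
    move=> x Yx; rewrite /SY /= comm; exact: iY.
  split.
    by exists (sh 1 y0); rewrite /SY /= shD addNr sh0.
  move=> W WS [x0 Wx0] cW iW.
  have W'Y : [set y | W (sh 1 y)] = Y.
    apply: minY.
    - move=> y Wy; have := WS _ Wy; by rewrite /SY /= shD addNr sh0.
    - by exists (sh (-1) x0); rewrite /= shD addrN sh0.
    - exact: closedW_sh.
    - by move=> y Wy; rewrite /= comm; exact: iW.
  apply/funext => x; apply/propext; split; first exact: WS.
  move=> SYx; have : [set y | W (sh 1 y)] (sh (-1) x) by rewrite W'Y.
  by rewrite /= shD addrN sh0.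
have eY := uY _ cSY.
have YXe : Y = X.
  apply: X_min => //; first by exists y0.
  move=> y Yy; rewrite -eY /SY /= shift_sh shD addNr sh0 //.
by move: iY minY; rewrite YXe => iY minY; split => //; exists y0; rewrite -YXe.
Qed.

Lemma iter_eig (f : (int -> A) -> CC) (z : CC) :
  (forall x, X x -> f (Defs.shift x) = z * f x) ->
  forall n x, X x -> f (iter n (@Defs.shift A) x) = z ^+ n * f x.
Proof.
move=> H; elim => [|n IH] x Xx; first by rewrite expr0 mul1r.
rewrite iterS H; last by rewrite iter_shift; exact: X_sh.
by rewrite IH // exprS mulrA.
Qed.

Lemma c_to_d : (exists Y, Sp_minimal_component X p Y /\
            forall Y', Sp_minimal_component X p Y' -> Y' = Y) ->
  (forall k : int,
          let theta : RR := 2 * pi * (k%:~R) / (p%:R) in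
          topological_eigenvalue X (cos theta +i* sin theta)%C ->
          (cos theta +i* sin theta)%C = 1).
Proof.
move=> /c_to_Spmin [_ mX] k theta [f [cf [ef [x0 [Xx0 fx0]]]]].
have lp : (cis theta) ^+ p = 1.
  rewrite cis_pow /theta (_ : p%:R * (2 * pi * k%:~R / p%:R) = 2 * pi * k%:~R).
    by have [-> ->] := cis_2pi_int k.
  by field; rewrite pnatr_eq0 -lt0n.
have EX : [set x | X x /\ f x = f x0] = X.
  apply: mX.
  - by move=> x [].
  - by exists x0.
  - move=> x Hx.
    have Xx : X x by apply: X_closed => n; have [y [[? _] ?]] := Hx n; exists y.
    split => //; apply/eqP; rewrite -subr_eq0; apply/eqP; apply: normc_small => e e0.
    have [m Hm] := cf x Xx e e0.
    have [y [[Xy fy] ag]] := Hx m.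
    by rewrite -fy; exact: Hm.
  - move=> x [Xx fx]; split; first by rewrite iter_shift; exact: X_sh.
    by rewrite (iter_eig ef) // lp mul1r.
have : [set x | X x /\ f x = f x0] (Defs.shift x0).
  by rewrite EX; apply: (proj1 (X_shift _)).
case=> _; rewrite ef // => /eqP; rewrite -subr_eq0 -{2}(mul1r (f x0)) -mulrBl mulf_eq0.
by rewrite (negbTE fx0) orbF subr_eq0 => /eqP.
Qed.

Lemma sum_rot (g : nat -> nat) (q : nat) : (0 < q)%N -> (forall j, g (j + q)%N = g j) ->
  (\sum_(j < q) g j.+1 = \sum_(j < q) g j)%N.
Proof.
case: q => // q _ hg.
have e : g q.+1 = g 0%N by rewrite -(hg 0%N) add0n.
rewrite big_ord_recr big_ord_recl /= e addnC; congr (_ + _)%N.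
Qed.

Lemma sum_eq_pw (q : nat) (a b : nat -> nat) : (forall j, (j < q)%N -> a j <= b j)%N ->
  (\sum_(j < q) a j = \sum_(j < q) b j)%N -> forall j, (j < q)%N -> a j = b j.
Proof.
move=> le e j jq; apply/eqP; rewrite eqn_leq le //=; rewrite leqNgt; apply/negP => lt.
have : (\sum_(i < q) a i < \sum_(i < q) b i)%N.
  rewrite (bigD1 (Ordinal jq)) // [X in (_ < X)%N](bigD1 (Ordinal jq)) //=.
  rewrite -addSn; apply: leq_add => //; apply: leq_sum => i _; exact: le.
by rewrite e ltnn.
Qed.

Lemma leq_bb (b1 b2 : bool) : (b1 -> b2) -> (b1 <= b2)%N.
Proof. by case: b1; case: b2 => // /(_ isT). Qed.

Section DtoB.
Variable Z : set ((int -> A) * (int -> B)).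
Hypothesis ZP : Z `<=` prod_space X X'.
Variable z0 : (int -> A) * (int -> B).
Hypothesis Zz0 : Z z0.
Hypothesis cZ : closedW (@agreeP A B) Z.
Hypothesis iZ : invariantW (@prod_shift A B) Z.

Definition bb x (j : nat) : bool := `[< Z (x, sh j%:Z w) >].

Lemma bper_add x j m : bb x (j + m * p)%N = bb x j.
Proof. by rewrite /bb PoszD PoszM sh_per_int. Qed.

Lemma bper x j : bb x j = bb x (j %% p)%N.
Proof. by rewrite {1}(divn_eq j p) addnC bper_add. Qed.

Lemma bS x j : bb x j -> bb (Defs.shift x) j.+1.
Proof.
move=> /asboolP h; apply/asboolP; have := iZ h; rewrite /prod_shift /=.
have e : Defs.shift (sh j%:Z w) = sh j.+1%:Z w.
  by apply/funext => i; rewrite /Defs.shift /sh; congr w; lia.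
by rewrite e.
Qed.

Definition cnt x := (\sum_(j < p) bb x j)%N.

Lemma usc x : exists m, forall y, agree m x y -> forall j, bb y j -> bb x j.
Proof.
have H : forall j : 'I_p, exists n, ~ Z (x, sh j%:Z w) ->
    forall z, Z z -> ~ agreeP n (x, sh j%:Z w) z.
  move=> j; case: (pselect (Z (x, sh j%:Z w))) => h; first by exists 0%N.
  have [n Hn] := closedW_contra cZ h; by exists n.
have [f Hf] := choice H.
exists (\max_(j < p) f j)%N => y ag j; rewrite (bper x) (bper y) => /asboolP Zy.
apply/asboolP; apply: contrapT => nZ.
have jp : (j %% p < p)%N by rewrite ltn_pmod.
apply: (Hf (Ordinal jp) nZ _ Zy); split => //=.
apply: agree_mono ag; exact: (leq_bigmax (Ordinal jp)).
Qed.

Lemma cnt_le x y : (forall j, bb y j -> bb x j) -> (cnt y <= cnt x)%N.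
Proof. move=> H; apply: leq_sum => j _; apply: leq_bb; exact: H. Qed.

Lemma cntS x : (cnt x <= cnt (Defs.shift x))%N.
Proof.
rewrite /cnt -(sum_rot (g := fun j => (bb (Defs.shift x) j : nat))) //; last first.
  by move=> j; rewrite /= -{1}(mul1n p) bper_add.
apply: leq_sum => j _; apply: leq_bb; exact: bS.
Qed.

Lemma exists_min : exists2 x1, X x1 & forall y, X y -> (cnt x1 <= cnt y)%N.
Proof.
have ex : exists n, (fun n => `[< exists x, X x /\ cnt x = n >]) n.
  exists (cnt z0.1); apply/asboolP; exists z0.1; split => //; exact: (ZP Zz0).1.
case: (ex_minnP ex) => n /asboolP [x1 [Xx1 e]] mn.
exists x1 => // y Xy; rewrite e; apply: mn; apply/asboolP; by exists y.
Qed.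

Let x1 := let: exist2 x _ _ := cid2 exists_min in x.
Let Xx1 : X x1. Proof. by rewrite /x1; case: cid2. Qed.
Let x1min y : X y -> (cnt x1 <= cnt y)%N. Proof. move=> Xy; rewrite /x1; case: cid2 => x _ H; exact: H. Qed.
Let k := cnt x1.

Lemma cnt_const y : X y -> cnt y = k.
Proof.
move=> Xy; apply/eqP; rewrite eqn_leq x1min // andbT leqNgt; apply/negP => kl.
have GX : [set y | X y /\ (k < cnt y)%N] = X.
  apply: X_min.
  - by move=> ? [].
  - by exists y.
  - move=> y' Hy'.
    have Xy' : X y' by apply: X_closed => n; have [u [[? _] ?]] := Hy' n; exists u.
    split => //; have [m Hm] := usc y'.
    have [u [[_ ku] ag]] := Hy' m.
    by apply: leq_trans ku _; apply: cnt_le; exact: Hm.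
  - move=> u [Xu ku]; split; first exact: (proj1 (X_shift _)).
    exact: leq_trans ku (cntS u).
have : [set y | X y /\ (k < cnt y)%N] x1 by rewrite GX.
by case=> _; rewrite ltnn.
Qed.

Lemma bS_eq y j : X y -> bb (Defs.shift y) j.+1 = bb y j.
Proof.
move=> Xy.
have H : forall j, (j < p)%N -> (bb y j : nat) = bb (Defs.shift y) j.+1.
  apply: sum_eq_pw.
    by move=> i _; apply: leq_bb; exact: bS.
  rewrite (sum_rot (g := fun j => (bb (Defs.shift y) j : nat))) //; last first.
    by move=> i; rewrite /= -{1}(mul1n p) bper_add.
  rewrite -/(cnt y) -/(cnt (Defs.shift y)) !cnt_const //.
  exact: (proj1 (X_shift _)).
have jp : (j %% p < p)%N by rewrite ltn_pmod.
have e1 : bb (Defs.shift y) j.+1 = bb (Defs.shift y) (j %% p).+1.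
  by rewrite {1}(divn_eq j p) addnC -addSn bper_add.
rewrite e1 (bper y j); move: (H _ jp).
by case: (bb y _); case: (bb _ _).
Qed.



Lemma lc y : X y -> exists m, forall y', X y' -> agree m y y' -> forall j, bb y' j = bb y j.
Proof.
move=> Xy; have [m Hm] := usc y; exists m => y' Xy' ag j.
have H : forall j, (j < p)%N -> (bb y' j : nat) = bb y j.
  apply: sum_eq_pw; first by move=> i _; apply: leq_bb; exact: Hm.
  by rewrite -/(cnt y') -/(cnt y) !cnt_const.
rewrite (bper y' j) (bper y j); move: (H _ (ltn_pmod j hp)).
by case: (bb y' _); case: (bb y _).
Qed.

Let xb := z0.1.

Lemma xb_true : exists j0, bb xb j0.
Proof.
have [_ ] := ZP Zz0; rewrite X'_elem => -[j _ e].
exists j; apply/asboolP; rewrite /xb -e; by case: z0 Zz0.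
Qed.

Definition Pt t y := forall j, bb y (j + t)%N = bb xb j.

Lemma Pt_shift t y : X y -> Pt t y -> Pt t.+1 (Defs.shift y).
Proof. by move=> Xy H j; rewrite addnS bS_eq. Qed.

Lemma Pt_mod t y : Pt t y -> Pt (t %% p) y.
Proof.
move=> H j; rewrite -H {2}(divn_eq t p) [(_ * p + _)%N]addnC addnA bper_add //.
Qed.

Lemma EX : [set y | exists2 t, (t < p)%N & (X y /\ Pt t y)] = X.
Proof.
apply: X_min.
- by move=> y [t _ []].
- exists xb; exists 0%N => //; split; [exact: (ZP Zz0).1 | by move=> j; rewrite addn0].
- apply: closedW_finU; first exact: agree_mono.
  move=> t _ y Hy.
  have Xy : X y by apply: X_closed => n; have [u [[? _] ?]] := Hy n; exists u.
  split => //; have [m Hm] := lc Xy.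
  have [u [[Xu Pu] ag]] := Hy m.
  by move=> j; rewrite -(Pu j) (Hm u Xu ag).
- move=> y [t tp [Xy Py]]; exists (t.+1 %% p)%N; first by rewrite ltn_pmod.
  split; first exact: (proj1 (X_shift _)).
  apply: Pt_mod; exact: Pt_shift.
Qed.

Definition stab s := forall j, bb xb (j + s)%N = bb xb j.

Lemma stab_add a b : stab a -> stab b -> stab (a + b).
Proof. by move=> ha hb j; rewrite addnA hb ha. Qed.

Lemma stab_mul a q : stab a -> stab (q * a).
Proof.
move=> ha; elim: q => [|q IH]; first by move=> j; rewrite mul0n addn0.
by rewrite mulSn; apply: stab_add.
Qed.

Lemma stab_sub a b : stab a -> stab b -> (b <= a)%N -> stab (a - b).
Proof. by move=> ha hb ba j; rewrite -hb -addnA subnK // ha. Qed.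

Lemma stab_p : stab p.
Proof. by move=> j; rewrite -{1}(mul1n p) bper_add. Qed.

Lemma Pt_uniq t t' y : Pt t y -> Pt t' y -> (t <= t')%N -> stab (t' - t).
Proof. by move=> h h' tt j; rewrite -h -addnA subnK // h'. Qed.



Lemma DtoB_all :
  (forall k : int,
          let theta : RR := 2 * pi * (k%:~R) / (p%:R) in
          topological_eigenvalue X (cos theta +i* sin theta)%C ->
          (cos theta +i* sin theta)%C = 1) ->
  forall z, prod_space X X' z -> Z z.
Proof.
move=> Hd.
have ex : exists s, (fun s => (0 < s)%N && `[< stab s >]) s.
  by exists p; rewrite hp; apply/asboolP; exact: stab_p.
case: (ex_minnP ex) => d /andP [d0 /asboolP sd] dmin.
have stab_dvd : forall s, stab s -> (d %| s)%N.
  move=> s ss; rewrite /dvdn; apply/eqP; apply: contrapT => /eqP nz.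
  have : stab (s %% d).
    have -> : (s %% d = s - s %/ d * d)%N by rewrite {2}(divn_eq s d) addKn.
    by apply: stab_sub => //; [exact: stab_mul | exact: leq_trunc_div].
  move=> h; have := dmin (s %% d)%N; rewrite lt0n nz /=.
  by move=> /(_ (introT (asboolP _) h)); rewrite leqNgt ltn_pmod.
have dp : (d %| p)%N := stab_dvd _ stab_p.
set q := (p %/ d)%N.
have qd : (q * d = p)%N by rewrite divnK.
have qdR : (q%:R * d%:R = p%:R :> RR) by rewrite -natrM qd.
have pR0 : (p%:R != 0 :> RR) by rewrite pnatr_eq0 -lt0n.
have q0 : (0 < q)%N by rewrite divn_gt0 // dvdn_leq.
have qR0 : (q%:R != 0 :> RR) by rewrite pnatr_eq0 -lt0n.
have dR0 : (d%:R != 0 :> RR) by rewrite pnatr_eq0 -lt0n.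
set theta : RR := 2 * pi * ((q%:Z)%:~R) / (p%:R).
have thetaE : theta = 2 * pi / d%:R.
  rewrite /theta -qdR (_ : (q%:Z)%:~R = q%:R :> RR) //; field.
  by apply/andP; split.
set lam := (cos theta +i* sin theta)%C.
have lamd : lam ^+ d = 1.
  rewrite /lam cis_pow (_ : d%:R * theta = 2 * pi * (1%:Z)%:~R).
    by have [-> ->] := cis_2pi_int 1.
  by rewrite thetaE; field.
have lam0 : lam != 0.
  apply/negP => /eqP l0; move: lamd; rewrite l0 expr0n (gtn_eqF d0) /=.
  by move=> /esym/eqP; rewrite oner_eq0.
have lam_dvd : forall a b, (a <= b)%N -> (d %| (b - a))%N -> lam ^+ b = lam ^+ a.
  move=> a b ab /dvdnP [c e].
  by rewrite -(subnKC ab) exprD e mulnC exprM lamd expr1n mulr1.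
pose f y := lam ^+ (xget 0%N [set t | Pt t y]).
have fP : forall y t, Pt t y -> f y = lam ^+ t.
  move=> y t Pty; rewrite /f; set g := xget _ _.
  have Pg : Pt g y by apply: (@xgetPex _ 0%N [set t | Pt t y]); exists t.
  case: (leqP g t) => h.
    by apply/esym/lam_dvd => //; apply: stab_dvd; exact: (Pt_uniq Pg Pty).
  by apply: lam_dvd; [exact: ltnW | apply: stab_dvd; exact: (Pt_uniq Pty Pg (ltnW h))].
have PX : forall y, X y -> exists t, Pt t y.
  by move=> y; rewrite -EX => -[t _ [_ h]]; exists t.
have eig : topological_eigenvalue X lam.
  exists f; split.
    move=> y Xy e e0; have [m Hm] := lc Xy; exists m => y' Xy' ag.
    have [t Pt_y] := PX y Xy.
    have Pt_y' : Pt t y' by move=> j; rewrite (Hm y' Xy' ag).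
    by rewrite (fP _ _ Pt_y) (fP _ _ Pt_y') subrr ComplexField.Normc.normc0.
  split.
    move=> y Xy; have [t Pt_y] := PX y Xy.
    by rewrite (fP _ _ Pt_y) (fP _ _ (Pt_shift Xy Pt_y)) exprS.
  exists xb; split; first exact: (ZP Zz0).1.
  by rewrite (fP xb 0%N) ?expr0 ?oner_eq0 // => j; rewrite addn0.
have := Hd q eig; rewrite -/theta -/lam => l1.
have d1 : d = 1%N.
  move: l1; rewrite /lam => /eqP; rewrite eq_complex /= => /andP [/eqP c1 /eqP s0].
  case: (ltngtP d 2) => hd.
  - by apply/eqP; rewrite eqn_leq -ltnS hd d0.
  - have th : 0 < theta < pi.
      rewrite thetaE; apply/andP; split.
        by apply: divr_gt0; [rewrite mulr_gt0 // pi_gt0 | rewrite ltr0n].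
      rewrite ltr_pdivrMr ?ltr0n //.
      have h2 : (2 : RR) < d%:R by rewrite ltr_nat.
      have := @pi_gt0 RR; nra.
    by have := sin_gt0_pi th; rewrite s0 ltxx.
  - have pe : 2 * pi / 2%:R = pi :> RR.
      by rewrite mulrAC divff ?mul1r // pnatr_eq0.
    exfalso; move: c1; rewrite thetaE hd pe trigo.cospi; lra.
have s1 : stab 1 by rewrite -d1.
have allb : forall j, bb xb j.
  have [j0 hj0] := xb_true.
  have c : forall j, bb xb j = bb xb 0%N.
    by elim => // j IH; rewrite -addn1 s1.
  by move=> j; rewrite c -(c j0).
move=> [x v] [/= Xx X'v].
have [t tp [_ Ptx]] : [set y | exists2 t, (t < p)%N & (X y /\ Pt t y)] x by rewrite EX.
move: X'v; rewrite X'_elem => -[j _ ->].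
have : bb x j.
  rewrite -(bper_add x j t) (_ : (j + t * p = (j + t * p - t) + t)%N); last first.
    by rewrite subnK // (leq_trans _ (leq_addl _ _)) // leq_pmulr.
  by rewrite Ptx allb.
by move/asboolP.
Qed.

End DtoB.

Lemma d_to_b :
  (forall k : int,
          let theta : RR := 2 * pi * (k%:~R) / (p%:R) in
          topological_eigenvalue X (cos theta +i* sin theta)%C ->
          (cos theta +i* sin theta)%C = 1) ->
  minimalW (@agreeP A B) (@prod_shift A B) (prod_space X X').
Proof.
move=> Hd; split; first exact: prod_ne.
move=> Z ZP [z0 Zz0] cZ iZ; apply/funext => z; apply/propext; split; first exact: ZP.
exact: (DtoB_all ZP Zz0 cZ iZ Hd).
Qed.

Definition gfun (a : A) (c : A * B) (j : nat) :
  g_sigma_algebraType (@cylinders A a) -> g_sigma_algebraType (@cylinders (A * B)%type c) :=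
  fun x i => (x i, w (i + j%:Z)).
Arguments gfun : clear implicits.

Lemma mg_lemma a c j : measurable_fun setT (gfun a c j).
Proof.
apply: (@measurability _ _ _ _ setT (gfun a c j) (@cylinders _ c) erefl).
move=> _ [_ [i [n [u ->]]] <-].
case: (pselect (forall k : 'I_n, w (i + (k:nat)%:Z + j%:Z) = (tnth u k).2)) => h.
- have -> : setT `&` gfun a c j @^-1` cyl i u = cyl i (map_tuple fst u).
    apply/funext => x; apply/propext; split.
      by move=> [_ H] k; rewrite tnth_map -(H k).
    move=> H; split => // k; rewrite /gfun /= (H k) tnth_map h; by case: (tnth u k).
  apply: sub_sigma_algebra; by exists i, n, (map_tuple fst u).
- have -> : setT `&` gfun a c j @^-1` cyl i u = set0.
    apply/funext => x; apply/propext; split => // -[_ H]; apply: h => k; by rewrite -(H k).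
  exact: measurable0.
Qed.

Lemma sum_rot_e (F : nat -> \bar RR) (q : nat) : (0 < q)%N -> F q = F 0%N ->
  (\sum_(j < q) F j.+1 = \sum_(j < q) F j)%E.
Proof.
case: q => // q _ e.
rewrite big_ord_recr big_ord_recl /= e addeC; congr (_ + _)%E.
Qed.

Lemma b_to_a (hB : boshernitzan X) :
  minimalW (@agreeP A B) (@prod_shift A B) (prod_space X X') ->
  conj_to_bosh_minimal_subshift X X'.
Proof.
move=> mP.
have [a [nu [nuinv [nuX npos]]]] := hB.
pose Y : set (int -> A * B) := [set y | X (fun i => (y i).1) /\ X' (fun i => (y i).2)].
pose phi := fun z : (int -> A) * (int -> B) => fun i => (z.1 i, z.2 i).
pose psi := fun y : int -> A * B => ((fun i => (y i).1), (fun i => (y i).2)).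
have psiphi : forall z, psi (phi z) = z by case.
have phipsi : forall y, phi (psi y) = y.
  by move=> y; apply: funext => i; rewrite /phi /psi /=; case: (y i).
have Ycl : closedW (@agree _) Y.
  move=> y Hy; split.
    apply: X_closed => n; have [y' [[Xy' _] ag]] := Hy n; exists (fun i => (y' i).1).
    by split => // i Hi; rewrite (ag i Hi).
  apply: X'_closed => n; have [y' [[_ Xy'] ag]] := Hy n; exists (fun i => (y' i).2).
  by split => // i Hi; rewrite (ag i Hi).
have minY : minimal_subshift Y.
  split.
    split.
      by have [z Pz] := prod_ne; exists (phi z).
    split => // x; split => -[h1 h2]; split.
    - exact: (proj1 (X_shift _) h1).
    - exact: (proj1 (X'_shift _) h2).
    - exact: (proj2 (X_shift _) h1).
    - exact: (proj2 (X'_shift _) h2).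
  split; first by have [z Pz] := prod_ne; exists (phi z).
  move=> W WY [y0 Wy0] cW iW.
  have ZP : [set z | prod_space X X' z /\ W (phi z)] = prod_space X X'.
    case: mP => _; apply.
    - by move=> z [].
    - by exists (psi y0); split; [exact: WY | rewrite phipsi].
    - move=> z Hz; split.
        by apply: prod_closed => n; have [z' [[? _] ?]] := Hz n; exists z'.
      apply: cW => n; have [z' [[_ Wz'] [ag1 ag2]]] := Hz n; exists (phi z'); split => //.
      by move=> i Hi; rewrite /phi (ag1 i Hi) (ag2 i Hi).
    - by move=> z [Pz Wz]; split; [exact: (prod_inv Pz) | exact: (iW _ Wz)].
  apply/funext => y; apply/propext; split; first exact: WY.
  move=> Yy; have : [set z | prod_space X X' z /\ W (phi z)] (psi y) by rewrite ZP.
  by case=> _; rewrite phipsi.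
pose c : A * B := (a, w 0).
pose mu := mix nu (@mg_lemma a c) hp.
have bound : forall n, ((p%:R^-1)%:E * min_cyl_measure X nu n <= min_cyl_measure Y mu n)%E.
  move=> n; rewrite /min_cyl_measure; apply: le_bigmin; first exact: leey.
  move=> u /asboolP [y [[Xy1 X'y2] cy]].
  have [j jp ey] : exists2 j, (j < p)%N & (fun i => (y i).2) = sh j%:Z w by apply/X'_elem.
  pose u1 := map_tuple fst u.
  have cyl_eq : gfun a c j @^-1` cyl 0 u = cyl 0 u1.
    apply/funext => x; apply/propext; split.
      by move=> H k; rewrite tnth_map -(H k).
    move=> H k; rewrite /gfun (H k) tnth_map -(cy k).
    have := congr1 (fun f => f (0 + (k:nat)%:Z)) ey; rewrite /sh /= => <-; by case: (y _).
  have l1 : in_lang X u1 by exists (fun i => (y i).1); split => // k; rewrite tnth_map -(cy k).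
  rewrite /mu mixE; apply: le_trans (_ : (p%:R^-1)%:E * nu (cyl 0 u1) <= _)%E.
    apply: lee_wpmul2l; first by rewrite lee_fin invr_ge0 ler0n.
    by apply: bigmin_le_cond; apply/asboolP.
  apply: lee_wpmul2l; first by rewrite lee_fin invr_ge0 ler0n.
  rewrite (bigD1 (Ordinal jp)) //= cyl_eq; apply: leeDl; apply: sume_ge0 => k _; exact: measure_ge0.
exists (A * B)%type, Y, phi, psi; split => //; split.
  exists c, mu; split.
    move=> E mE; rewrite /mu /= !mixE; congr (_ * _)%E.
    have e1 : forall j, gfun a c j @^-1` (@Defs.shift _ @^-1` E) =
                        @Defs.shift _ @^-1` (gfun a c j.+1 @^-1` E).
      move=> j; apply/funext => x; apply/propext; rewrite /preimage /=.
      suff -> : Defs.shift (gfun a c j x) = gfun a c j.+1 (Defs.shift x) by [].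
      by apply/funext => i; rewrite /gfun /Defs.shift /=; congr (_, w _); lia.
    have e2 : forall j, nu (gfun a c j @^-1` (@Defs.shift _ @^-1` E)) = nu (gfun a c j.+1 @^-1` E).
      move=> j; rewrite e1 nuinv //; have := @mg_lemma a c j.+1 measurableT _ mE; by rewrite setTI.
    under eq_bigr do rewrite e2.
    apply: (@sum_rot_e (fun j => nu (gfun a c j @^-1` E))) => //=.
    have -> : gfun a c p = gfun a c 0.
      by apply/funext => x; apply/funext => i; rewrite /gfun addr0 hw.
    by [].
  split.
    rewrite /mu /= mixE.
    have eY : forall j, gfun a c j @^-1` Y = X.
      move=> j; apply/funext => x; apply/propext; split; first by case.
      by move=> Xx; split => //; exact: X'_w.
    under eq_bigr do rewrite eY nuX.
    rewrite sumEFin sumr_const card_ord -EFinM mulVf //.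
    by rewrite pnatr_eq0 -lt0n.
  apply: (@limsup_pos _ _ (p%:R^-1)) _ _ npos.
    by rewrite invr_gt0 ltr0n.
  move=> n; rewrite muleCA; apply: lee_wpmul2l; last exact: bound.
  by rewrite lee_fin ler0n.
split; first by move=> z Pz; exact: Pz.
split; first by move=> y Yy; exact: Yy.
split; first by move=> z _; exact: psiphi.
split; first by move=> y _; exact: phipsi.
split.
  by move=> z _ n; exists n => z' _ [h1 h2] i Hi; rewrite /phi /= (h1 i Hi) (h2 i Hi).
split.
  by move=> y _ n; exists n => y' _ ag; split => i Hi /=; rewrite (ag i Hi).
by move=> z _.
Qed.
End Main.

Theorem theorem3p9 (A B : finType) (X : set (int -> A)) (X' : set (int -> B)) (p : nat) :
  (0 < p)%N ->
  minimal_subshift X -> boshernitzan X ->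
  periodic_subshift p X' ->
  [<-> (* (a) *) conj_to_bosh_minimal_subshift X X';
       (* (b) *) minimalW (@agreeP A B) (@prod_shift A B) (prod_space X X');
       (* (c) s(p) = 1 *)
       (exists Y, Sp_minimal_component X p Y /\
                  forall Y', Sp_minimal_component X p Y' -> Y' = Y);
       (* (d) *)
       (forall k : int,
          let theta : RR := 2 * pi * (k%:~R) / (p%:R) in
          topological_eigenvalue X (cos theta +i* sin theta)%C ->
          (cos theta +i* sin theta)%C = 1)].
Proof.
move=> hp hX hB [w [hw [hwmin hX']]].
tfae.
- by move=> H; exact: (a_to_b hX hX' H).
- by move=> H; exact: (b_to_c hp hX hw hwmin hX' H).
- by move=> H; exact: (c_to_d hp hX H).
- move=> H; apply: (b_to_a hp hX hw hX' hB).
  exact: (d_to_b hp hX hw hX' H).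
Qed.
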